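(* Consider the FlexPD-G iterates described in the context with $\alpha,\beta>0$ and integer $T\ge1$. For any $\bar d,\bar c,\bar g,\bar e>1$ and every $k\ge0$, \[\|\lambda^{k+1}-\lambda^*\|^2\le\frac{\bar d\bar c}{\alpha^2 s(AA')}\Big(\bar g+\frac{\bar g\alpha^2L^2}{\bar g-1}\Big)\|x^{k+1,T}-x^{k+1,T-1}\|^2+\frac{\bar d\bar c}{s(AA')(\bar c-1)}\Big(\bar e\beta^2\rho^2(A'A)+\frac{\bar eL^2}{\bar e-1}\Big)\|x^{k+1,T}-x^*\|^2+\frac{\bar d\rho^2(B)}{s(AA')(\bar d-1)}\|x^k-x^*\|^2.\]
   Context: Setting: $n$ agents are connected by a connected undirected graph with edge set $\mathcal E$, $\epsilon=|\mathcal E|$. For $x\in\mathbb R^n$ let $f(x)=\sum_{i=1}^n f_i(x_i)$, where each $f_i:\mathbb R\to\mathbb R$ is twice differentiable with $m\le f_i''\le L$ for constants $0<m\le L$; $\nabla f(x)=(f_1'(x_1),\dots,f_n'(x_n))'$. $A\in\mathbb R^{\epsilon\times n}$ is the edge–node incidence matrix (null space spanned by the all-ones vector). $B\in\mathbb R^{n\times n}$ is symmetric positive semidefinite with the same null space as $A$, off-diagonal entries nonzero only on edges, and $\rho(B)<m$. $x^*$ is the unique minimizer of $f$ subject to $Ax=0$ and $\lambda^*$ a Lagrange multiplier with $\nabla f(x^* )+A'\lambda^*=0$, $Ax^*=0$, $Bx^*=0$, chosen in the column space of $A$ (orthogonal to the null space of $A'$). FlexPD-G: given $\alpha,\beta>0$,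 $T\ge1$, $x^0$ arbitrary, $\lambda^0=0$; for $k\ge0$: $x^{k+1,0}=x^k$; for $t=1,\dots,T$, $x^{k+1,t}=x^{k+1,t-1}-\alpha\nabla f(x^{k+1,t-1})-\alpha A'\lambda^k-\alpha Bx^k$; then $x^{k+1}=x^{k+1,T}$, $\lambda^{k+1}=\lambda^k+\beta Ax^{k+1}$. Notation: $\rho(S)$ largest eigenvalue of symmetric $S$; $s(AA')$ smallest nonzero eigenvalue of $AA'$; $\|\cdot\|$ Euclidean norm. *)

(* Defs.v *)
From HB Require Import structures.
From mathcomp Require Import all_boot all_order all_algebra.
From mathcomp Require Import all_classical all_reals all_analysis.
Set Implicit Arguments. Unset Strict Implicit. Unset Printing Implicit Defensive.
Import Order.TTheory GRing.Theory Num.Theory.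
Local Open Scope ring_scope.
Local Open Scope classical_set_scope.

Section Defs.
Variable R : realType.

Definition enorm (p : nat) (v : 'cV[R]_p) : R := Num.sqrt (\sum_i (v i 0) ^+ 2).

Definition max_eig (p : nat) (S : 'M[R]_p) : R := sup [set a | eigenvalue S a].

Definition min_nz_eig (p : nat) (S : 'M[R]_p) : R :=
  inf [set a | eigenvalue S a /\ a != 0].

Definition adj (n eps : nat) (ends : 'I_eps -> 'I_n * 'I_n) : rel 'I_n :=
  fun i j => [exists e, (ends e == (i, j)) || (ends e == (j, i))].

(* A is the edge-node incidence matrix of the graph given by ends
   (each edge e = (i,j) oriented arbitrarily: +1 at i, -1 at j) *)
Definition incidence (n eps : nat) (ends : 'I_eps -> 'I_n * 'I_n) : 'M[R]_(eps, n) :=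
  \matrix_(e, i) ((i == (ends e).1)%:R - (i == (ends e).2)%:R).

Definition fsum (n : nat) (f : 'I_n -> R -> R) (x : 'cV[R]_n) : R :=
  \sum_i f i (x i 0).
Definition grad (n : nat) (f : 'I_n -> R -> R) (x : 'cV[R]_n) : 'cV[R]_n :=
  \col_i derive1 (f i) (x i 0).

(* FlexPD-G inner loop: x^{k+1,t} computed from x^k, lambda^k *)
Fixpoint flex_inner (n eps : nat) (f : 'I_n -> R -> R) (A : 'M[R]_(eps, n))
   (B : 'M[R]_n) (alpha : R) (xk : 'cV[R]_n) (lk : 'cV[R]_eps) (t : nat) : 'cV[R]_n :=
  match t with
  | 0 => xk
  | t'.+1 => let y := flex_inner f A B alpha xk lk t' in
      y - alpha *: grad f y - alpha *: (A^T *m lk) - alpha *: (B *m xk)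
  end.

Fixpoint flex_outer (n eps : nat) (f : 'I_n -> R -> R) (A : 'M[R]_(eps, n))
   (B : 'M[R]_n) (alpha beta : R) (T : nat) (x0 : 'cV[R]_n) (k : nat)
   : 'cV[R]_n * 'cV[R]_eps :=
  match k with
  | 0 => (x0, 0)
  | k'.+1 => let p := flex_outer f A B alpha beta T x0 k' in
      let x' := flex_inner f A B alpha p.1 p.2 T in
      (x', p.2 + beta *: (A *m x'))
  end.
End Defs.

(* Main.v *)
Require Import Defs.
From HB Require Import structures.
From mathcomp Require Import all_boot all_order all_algebra.
From mathcomp Require Import all_classical all_reals all_analysis.
From mathcomp.algebra_tactics Require Import ring lra.
Import Order.TTheory GRing.Theory Num.Theory.
Local Open Scope ring_scope.

Section Spec.
Set Implicit Arguments. Unset Strict Implicit. Unset Printing Implicit Defensive.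
Local Open Scope classical_set_scope.
Variable R : realType.

Definition nrm2 p (u : 'rV[R]_p) := \sum_i u 0 i ^+ 2.
Definition form p (P : 'M[R]_p) (a b : 'rV[R]_p) := (a *m P *m b^T) 0 0.
Definition frob p q (X : 'M[R]_(p, q)) := \sum_j \sum_i X i j ^+ 2.

Lemma nrm2E p (u : 'rV[R]_p) : nrm2 u = (u *m u^T) 0 0.
Proof. by rewrite /nrm2 mxE; apply: eq_bigr => i _; rewrite !mxE expr2. Qed.

Lemma nrm2_ge0 p (u : 'rV[R]_p) : 0 <= nrm2 u.
Proof. by apply: sumr_ge0 => i _; apply: sqr_ge0. Qed.

Lemma nrm2_eq0 p (u : 'rV[R]_p) : nrm2 u = 0 -> u = 0.
Proof.
move=> /psumr_eq0P H; apply/rowP => i; rewrite mxE.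
by apply/eqP; rewrite -sqrf_eq0; apply/eqP; apply: H => // j _; apply: sqr_ge0.
Qed.

Lemma nrm2_gt0 p (u : 'rV[R]_p) : u != 0 -> 0 < nrm2 u.
Proof.
move=> nz; rewrite lt_def nrm2_ge0 andbT; apply/eqP => /nrm2_eq0 h.
by rewrite h eqxx in nz.
Qed.

Lemma discr (a b c : R) : 0 <= c -> (forall t, 0 <= a + 2 * b * t + c * t ^+ 2) ->
  b ^+ 2 <= a * c.
Proof.
move=> c0 H; have [cz|cp] := eqVneq c 0.
  have [bz|bn] := eqVneq b 0; first by rewrite bz cz; lra.
  have := H (- (a + 1) / (2 * b)); rewrite cz mul0r addr0.
  have -> : 2 * b * (- (a + 1) / (2 * b)) = - (a + 1) by field; rewrite bn /=.
  lra.
have cp' : 0 < c by rewrite lt_def cp c0.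
have := H (- b / c).
have -> : a + 2 * b * (- b / c) + c * (- b / c) ^+ 2 = (a * c - b ^+ 2) / c.
  by field.
by rewrite pmulr_lge0 ?invr_gt0 // subr_ge0.
Qed.

Lemma form_sym p (P : 'M[R]_p) a b : P^T = P -> form P b a = form P a b.
Proof.
move=> sP; rewrite /form.
have -> : b *m P *m a^T = (a *m P *m b^T)^T by rewrite !trmx_mul trmxK sP mulmxA.
by rewrite mxE.
Qed.

Lemma form_expand p (P : 'M[R]_p) a b t : P^T = P ->
  form P (a + t *: b) (a + t *: b) =
  form P a a + 2 * form P a b * t + form P b b * t ^+ 2.
Proof.
move=> sP; have E := form_sym a b sP; move: E.
rewrite /form linearD /= linearZ /= !mulmxDl !mulmxDr -!scalemxAl -!scalemxAr.
set X1 := a *m P *m a^T; set X2 := a *m P *m b^T; set X3 := b *m P *m a^T; set X4 := b *m P *m b^T.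
rewrite !mxE => ->; ring.
Qed.

Lemma cs_form p (P : 'M[R]_p) a b : P^T = P ->
  (forall t, 0 <= form P (a + t *: b) (a + t *: b)) -> 0 <= form P b b ->
  form P a b ^+ 2 <= form P a a * form P b b.
Proof.
move=> sP H b0; apply: discr => // t; by rewrite -form_expand.
Qed.

Lemma form1 p (a b : 'rV[R]_p) : form 1%:M a b = \sum_i a 0 i * b 0 i.
Proof. by rewrite /form mulmx1 mxE; apply: eq_bigr => i _; rewrite mxE. Qed.

Lemma cs_sum p (x y : 'I_p -> R) :
  (\sum_i x i * y i) ^+ 2 <= (\sum_i x i ^+ 2) * (\sum_i y i ^+ 2).
Proof.
pose a := \row_i x i; pose b := \row_i y i.
have := @cs_form p 1%:M a b (trmx1 _ _).
have F : forall u v : 'rV[R]_p, form 1%:M u v = \sum_i u 0 i * v 0 i by move=> u v; exact: form1.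
rewrite !F /a /b.
have G : forall (z : 'I_p -> R), \sum_i (\row_i z i) 0 i * (\row_i z i) 0 i = \sum_i z i ^+ 2.
  by move=> z; apply: eq_bigr => i _; rewrite !mxE expr2.
have H : \sum_i (\row_i x i) 0 i * (\row_i y i) 0 i = \sum_i x i * y i.
  by apply: eq_bigr => i _; rewrite !mxE.
rewrite !G H; apply.
  move=> t; rewrite F; apply: sumr_ge0 => i _; rewrite -expr2; exact: sqr_ge0.
by apply: sumr_ge0 => i _; apply: sqr_ge0.
Qed.

Lemma nrm2_mul p q (u : 'rV[R]_p) (X : 'M[R]_(p, q)) :
  nrm2 (u *m X) <= frob X * nrm2 u.
Proof.
rewrite /nrm2 /frob mulr_suml; apply: ler_sum => j _; rewrite mxE.
by rewrite mulrC; apply: cs_sum.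
Qed.

Lemma form_le p (P : 'M[R]_p) w : form P w w <= (frob P + 1) / 2 * nrm2 w.
Proof.
have h1 : form P w w <= (nrm2 (w *m P) + nrm2 w) / 2.
  rewrite /form /nrm2 mxE -big_split /= mulr_suml; apply: ler_sum => j _.
  set wP := w *m P; rewrite [w^T j 0]mxE; have := sqr_ge0 (wP 0 j - w 0 j); lra.
have := nrm2_mul w P; have := nrm2_ge0 w; lra.
Qed.


Lemma frob_ge0 p q (X : 'M[R]_(p, q)) : 0 <= frob X.
Proof. by apply: sumr_ge0 => j _; apply: sumr_ge0 => i _; apply: sqr_ge0. Qed.

Lemma lower p q (P : 'M[R]_p) (U : 'M[R]_(q, p)) (X : 'M[R]_p) :
  P^T = P ->
  (forall u : 'rV_p, (u <= U)%MS -> (u *m P <= U)%MS) ->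
  (forall u : 'rV_p, (u <= U)%MS -> 0 <= form P u u) ->
  (forall u : 'rV_p, (u <= U)%MS -> u = u *m P *m X) ->
  exists2 c, 0 < c & forall u, (u <= U)%MS -> c * nrm2 u <= form P u u.
Proof.
move=> sP st ps hX.
pose G := (frob P + 1) / 2; pose F := frob X.
have G0 : 0 <= G by rewrite /G; have := frob_ge0 P; lra.
have F0 : 0 <= F by apply: frob_ge0.
have FG0 : 0 <= F * G by apply: mulr_ge0.
exists (1 / (F * G + 1)); first by rewrite divr_gt0 //; lra.
move=> u uU; pose w := u *m P.
have wU : (w <= U)%MS by apply: st.
have cs : form P u w ^+ 2 <= form P u u * form P w w.
  apply: cs_form => //; last by apply: ps.
  by move=> t; apply: ps; apply: addmx_sub => //; apply: scalemx_sub.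
have fuw : form P u w = nrm2 w by rewrite nrm2E.
have fww : form P w w <= G * nrm2 w by apply: form_le.
have fuu0 : 0 <= form P u u by apply: ps.
have nw0 : 0 <= nrm2 w by apply: nrm2_ge0.
have key : nrm2 w <= G * form P u u.
  have [nz|np] := eqVneq (nrm2 w) 0; first by rewrite nz; apply: mulr_ge0.
  have nwp : 0 < nrm2 w by rewrite lt_def np nw0.
  rewrite fuw in cs.
  have h2 : nrm2 w * nrm2 w <= (G * form P u u) * nrm2 w.
    rewrite -expr2; apply: (le_trans cs).
    have -> : G * form P u u * nrm2 w = form P u u * (G * nrm2 w) by ring.
    by apply: ler_wpM2l.
  by rewrite ler_pM2r in h2.
have nu : nrm2 u <= F * nrm2 w by rewrite {1}(hX u uU); apply: nrm2_mul.
have h3 : nrm2 u <= (F * G + 1) * form P u u.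
  apply: (le_trans nu); have := ler_wpM2l F0 key; nra.
have hp : 0 < F * G + 1 by lra.
by rewrite mul1r mulrC (ler_pdivrMr _ _ hp) mulrC.
Qed.

Lemma singular p q (P : 'M[R]_p) (U : 'M[R]_(q, p)) :
  P^T = P ->
  (forall u : 'rV_p, (u <= U)%MS -> (u *m P <= U)%MS) ->
  (forall u : 'rV_p, (u <= U)%MS -> 0 <= form P u u) ->
  (forall e, 0 < e -> exists u : 'rV_p, [/\ (u <= U)%MS, u != 0 & form P u u < e * nrm2 u]) ->
  exists2 w : 'rV_p, w *m P = 0 & w != 0.
Proof.
move=> sP st ps near.
have [Pu|Pn] := boolP (P \in unitmx).
  have [c c0 hc] := @lower p q P U (invmx P) sP st ps (fun u _ => esym (mulmxK Pu u)).
  have [u [uU unz ult]] := near c c0.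
  by have := hc u uU; rewrite leNgt ult.
exists (nz_row (kermx P)); first by apply/sub_kermxP; apply: nz_row_sub.
by rewrite nz_row_eq0 kermx_eq0 row_free_unit.
Qed.

Lemma form_eig p (M : 'M[R]_p) v a : v *m M = a *: v -> form M v v = a * nrm2 v.
Proof. by rewrite /form => ->; rewrite -scalemxAl nrm2E; set X := v *m v^T; rewrite mxE. Qed.

Lemma form_shift p (M : 'M[R]_p) a u :
  form (a%:M - M) u u = a * nrm2 u - form M u u.
Proof.
rewrite /form mulmxBr mul_mx_scalar mulmxBl -scalemxAl nrm2E.
by set X := u *m u^T; set Y := u *m M *m u^T; rewrite !mxE.
Qed.

Lemma sym_shift p (M : 'M[R]_p) a : M^T = M -> (a%:M - M)^T = a%:M - M.
Proof. by move=> sM; rewrite linearB /= tr_scalar_mx sM. Qed.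

Lemma form0 p (M : 'M[R]_p) : form M 0 0 = 0.
Proof. by rewrite /form !mul0mx mxE. Qed.

Lemma nrm20 p : nrm2 (0 : 'rV[R]_p) = 0.
Proof. by rewrite /nrm2 big1 // => i _; rewrite mxE expr0n. Qed.

Lemma opbound p (M : 'M[R]_p) c : M^T = M -> (forall u, 0 <= form M u u) ->
  (forall u, form M u u <= c * nrm2 u) ->
  forall u, nrm2 (u *m M) <= c ^+ 2 * nrm2 u.
Proof.
move=> sM psd hc u; pose w := u *m M.
have cs : form M u w ^+ 2 <= form M u u * form M w w by apply: cs_form.
have fuw : form M u w = nrm2 w by rewrite nrm2E.
have nw0 : 0 <= nrm2 w by apply: nrm2_ge0.
have nu0 : 0 <= nrm2 u by apply: nrm2_ge0.
have fuu0 := psd u; have fww0 := psd w.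
have h1 := hc u; have h2 := hc w.
rewrite -/w.
have [nz|np] := eqVneq (nrm2 w) 0; first by rewrite nz; apply: mulr_ge0 => //; apply: sqr_ge0.
have nwp : 0 < nrm2 w by rewrite lt_def np nw0.
have h3 : form M u u * form M w w <= (c * nrm2 u) * (c * nrm2 w) by apply: ler_pM.
have h4 : nrm2 w * nrm2 w <= (c ^+ 2 * nrm2 u) * nrm2 w.
  rewrite -expr2 -fuw; apply: (le_trans cs); apply: (le_trans h3); rewrite fuw; rewrite le_eqVlt; apply/orP; left; apply/eqP; ring.
by rewrite ler_pM2r in h4.
Qed.

Lemma v0nz p : (delta_mx ord0 ord0 : 'rV[R]_p.+1) != 0.
Proof. by apply/eqP => /rowP /(_ 0); rewrite !mxE eqxx /= => /eqP; rewrite oner_eq0. Qed.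

Lemma maxeig_bound p (M : 'M[R]_p) : M^T = M -> (forall u, 0 <= form M u u) ->
  forall u : 'rV_p, nrm2 (u *m M) <= max_eig M ^+ 2 * nrm2 u.
Proof.
case: p M => [|p] M sM psd u.
  by rewrite /nrm2 !big_ord0 mulr0.
pose S := [set r : R | exists2 v : 'rV[R]_p.+1, v != 0 & r = form M v v / nrm2 v].
pose G := (frob M + 1) / 2.
pose v0 := (delta_mx ord0 ord0 : 'rV[R]_p.+1).
have hs : has_sup S.
  split; first by exists (form M v0 v0 / nrm2 v0); exists v0 => //; apply: v0nz.
  exists G => r [v vnz ->].
  have np := nrm2_gt0 vnz; rewrite ler_pdivrMr //; exact: form_le.
pose mu := sup S.
have rayl : forall v, form M v v <= mu * nrm2 v.
  move=> v; have [->|vnz] := eqVneq v 0; first by rewrite form0 nrm20 mulr0.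
  have np := nrm2_gt0 vnz.
  have := sup_upper_bound hs (ex_intro2 _ _ v vnz erefl).
  by rewrite ler_pdivrMr.
have mu0 : 0 <= mu.
  apply: le_trans (sup_upper_bound hs (ex_intro2 _ _ v0 (v0nz p) erefl)).
  by apply: divr_ge0 => //; apply: nrm2_ge0.
have [w wP wnz] : exists2 w : 'rV_p.+1, w *m (mu%:M - M) = 0 & w != 0.
  apply: (@singular _ _ _ (1%:M : 'M[R]_p.+1)).
  - exact: sym_shift.
  - by move=> *; apply: submx1.
  - by move=> v _; rewrite form_shift subr_ge0; exact: rayl.
  - move=> e e0; have [r [v vnz ->] hr] := sup_adherent e0 hs.
    exists v; split => //; first exact: submx1.
    rewrite form_shift; have np := nrm2_gt0 vnz.
    rewrite ltr_pdivlMr // -/mu mulrBl in hr; lra.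
have eig_mu : eigenvalue M mu.
  apply/eigenvalueP; exists w => //.
  by move: wP; rewrite mulmxBr mul_mx_scalar => /eqP; rewrite subr_eq0 => /eqP ->.
have hE : has_sup [set a | eigenvalue M a].
  split; first by exists mu.
  exists mu => a /eigenvalueP [v va vnz].
  by have := rayl v; rewrite (form_eig va) ler_pM2r //; exact: nrm2_gt0.
have murho : mu <= max_eig M := sup_upper_bound hE eig_mu.
apply: le_trans (opbound sM psd rayl u) _.
apply: ler_wpM2r; first exact: nrm2_ge0.
by rewrite !expr2; apply: ler_pM.
Qed.

Lemma form_shift2 p (M : 'M[R]_p) a u :
  form (M - a%:M) u u = form M u u - a * nrm2 u.
Proof.
rewrite /form mulmxBr mul_mx_scalar mulmxBl -scalemxAl nrm2E.
by set X := u *m u^T; set Y := u *m M *m u^T; rewrite !mxE.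
Qed.

Lemma sym_shift2 p (M : 'M[R]_p) a : M^T = M -> (M - a%:M)^T = M - a%:M.
Proof. by move=> sM; rewrite linearB /= tr_scalar_mx sM. Qed.

Lemma formC q p (C : 'M[R]_(q, p)) u : form (C^T *m C) u u = nrm2 (u *m C^T).
Proof. by rewrite /form nrm2E trmx_mul trmxK !mulmxA. Qed.

Lemma symC q p (C : 'M[R]_(q, p)) : (C^T *m C)^T = C^T *m C.
Proof. by rewrite trmx_mul trmxK. Qed.

Lemma pinv_trick q p (C : 'M[R]_(q, p)) (u : 'rV[R]_p) : (u <= C)%MS ->
  u = u *m (C^T *m C) *m (pinvmx (C *m C^T *m C) *m C).
Proof.
move=> uC; pose z := u *m pinvmx C.
have hz : z *m C = u by rewrite /z mulmxKpV.
have e1 : u *m (C^T *m C) = z *m (C *m C^T *m C) by rewrite -hz !mulmxA.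
pose z' := u *m (C^T *m C) *m pinvmx (C *m C^T *m C).
have e2 : z' *m (C *m C^T *m C) = u *m (C^T *m C).
  by rewrite /z' mulmxKpV // e1 submxMl.
have e3 : (z' - z) *m (C *m C^T *m C) = 0 by rewrite mulmxBl e2 e1 subrr.
have e4 : (z' - z) *m (C *m C^T) = 0.
  apply: nrm2_eq0; rewrite nrm2E !trmx_mul trmxK !mulmxA.
  by rewrite !mulmxA in e3; rewrite e3 !mul0mx mxE.
have e5 : (z' - z) *m C = 0.
  apply: nrm2_eq0; rewrite nrm2E trmx_mul !mulmxA.
  by rewrite !mulmxA in e4; rewrite e4 !mul0mx mxE.
have e6 : z' *m C = z *m C by apply/eqP; rewrite -subr_eq0 -mulmxBl e5.
by rewrite (mulmxA (u *m (C^T *m C))); change (u = z' *m C); rewrite e6 hz.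
Qed.

Lemma mineig_bound q p (C : 'M[R]_(q, p)) (r : 'rV[R]_p) : (r <= C)%MS ->
  0 <= min_nz_eig (C^T *m C) /\
  (r != 0 -> 0 < min_nz_eig (C^T *m C) /\
             min_nz_eig (C^T *m C) * nrm2 r <= nrm2 (r *m C^T)).
Proof.
move=> rC; set M := C^T *m C.
have sM : M^T = M by apply: symC.
have psd : forall u, 0 <= form M u u by move=> u; rewrite formC; apply: nrm2_ge0.
pose E := [set a : R | eigenvalue M a /\ a != 0].
have Epos : forall a, E a -> 0 < a.
  move=> a [/eigenvalueP [v va vnz] anz].
  have := psd v; rewrite (form_eig va) pmulr_lge0; last exact: nrm2_gt0.
  by move=> a0; rewrite lt_def anz a0.
have s0 : 0 <= min_nz_eig M.
  rewrite /min_nz_eig -/E.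
  have [En|En] := pselect (E !=set0).
    by apply: lb_le_inf => // a Ea; apply/ltW/Epos.
  have -> : E = set0.
    by apply/seteqP; split => a // Ea; exfalso; apply: En; exists a.
  by rewrite inf0.
split => // rnz.
pose S := [set x : R | exists2 u : 'rV[R]_p, (u <= C)%MS && (u != 0) & x = form M u u / nrm2 u].
have hs : has_inf S.
  split; first by exists (form M r r / nrm2 r); exists r => //; rewrite rC rnz.
  exists 0 => x [u /andP [_ unz] ->]; apply: divr_ge0; [exact: psd | exact: nrm2_ge0].
pose nu := inf S.
have raylV : forall u, (u <= C)%MS -> nu * nrm2 u <= form M u u.
  move=> u uC; have [->|unz] := eqVneq u 0; first by rewrite form0 nrm20 mulr0.
  have np := nrm2_gt0 unz.
  have := ge_inf (proj2 hs) (ex_intro2 _ _ u (introT andP (conj uC unz)) erefl).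
  by rewrite ler_pdivlMr.
have stab : forall u : 'rV_p, (u <= C)%MS -> (u *m M <= C)%MS.
  by move=> u _; rewrite /M mulmxA submxMl.
have [c c0 hc] := @lower p q M C _ sM stab (fun u _ => psd u) (@pinv_trick q p C).
have cnu : c <= nu.
  apply: lb_le_inf; first by exists (form M r r / nrm2 r); exists r => //; rewrite rC rnz.
  move=> x [u /andP [uC unz] ->]; have np := nrm2_gt0 unz.
  by rewrite ler_pdivlMr //; apply: hc.
have nu0 : 0 < nu by apply: lt_le_trans cnu.
have [w wP wnz] : exists2 w : 'rV_p, w *m (M - nu%:M) = 0 & w != 0.
  apply: (@singular _ _ _ C).
  - exact: sym_shift2.
  - move=> u uC; rewrite mulmxBr mul_mx_scalar; apply: addmx_sub; first exact: stab.
    by rewrite -scaleNr; apply: scalemx_sub.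
  - by move=> u uC; rewrite form_shift2 subr_ge0; apply: raylV.
  - move=> e e0; have [x [u /andP [uC unz] ->] hx] := inf_adherent e0 hs.
    exists u; split => //.
    rewrite form_shift2; have np := nrm2_gt0 unz.
    rewrite ltr_pdivrMr // -/nu mulrDl in hx; lra.
have eig_nu : E nu.
  split; last by rewrite gt_eqF.
  apply/eigenvalueP; exists w => //.
  by move: wP; rewrite mulmxBr mul_mx_scalar => /eqP; rewrite subr_eq0 => /eqP ->.
have hsE : min_nz_eig M = nu.
  rewrite /min_nz_eig -/E; apply/eqP; rewrite eq_le; apply/andP; split.
    by apply: ge_inf => //; exists 0 => a Ea; apply/ltW/Epos.
  apply: lb_le_inf; first by exists nu.
  move=> a [/eigenvalueP [v va vnz] anz].
  have vC : (v <= C)%MS.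
    have -> : v = a^-1 *: (v *m M) by rewrite va scalerA mulVf // scale1r.
    by apply: scalemx_sub; rewrite /M mulmxA submxMl.
  have := raylV v vC; rewrite (form_eig va) ler_pM2r //; exact: nrm2_gt0.
rewrite hsE; split => //; rewrite -formC; exact: raylV.
Qed.

Definition ncol p (v : 'cV[R]_p) := \sum_i v i 0 ^+ 2.

Lemma ncol_ge0 p (v : 'cV[R]_p) : 0 <= ncol v.
Proof. by apply: sumr_ge0 => i _; apply: sqr_ge0. Qed.

Lemma enorm2 p (v : 'cV[R]_p) : enorm v ^+ 2 = ncol v.
Proof. by rewrite /enorm sqr_sqrtr //; apply: ncol_ge0. Qed.

Lemma ncol_tr p (v : 'cV[R]_p) : nrm2 (v^T) = ncol v.
Proof. by apply: eq_bigr => i _; rewrite mxE. Qed.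

Lemma young1 (c x y : R) : 1 < c -> (x + y) ^+ 2 <= c * x ^+ 2 + c / (c - 1) * y ^+ 2.
Proof.
move=> c1; have k0 : c - 1 != 0 by rewrite subr_eq0 gt_eqF.
have E : c * x ^+ 2 + c / (c - 1) * y ^+ 2 - (x + y) ^+ 2 = ((c - 1) * x - y) ^+ 2 / (c - 1).
  by field.
have : 0 <= ((c - 1) * x - y) ^+ 2 / (c - 1).
  by apply: divr_ge0; [apply: sqr_ge0 | lra].
by rewrite -E subr_ge0.
Qed.

Lemma youngN p c (a b : 'cV[R]_p) : 1 < c ->
  ncol (a + b) <= c * ncol a + c / (c - 1) * ncol b.
Proof.
move=> c1; rewrite /ncol !mulr_sumr -big_split /=; apply: ler_sum => i _.
by rewrite mxE; apply: young1.
Qed.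

Lemma ncolZ p a (v : 'cV[R]_p) : ncol (a *: v) = a ^+ 2 * ncol v.
Proof. by rewrite /ncol mulr_sumr; apply: eq_bigr => i _; rewrite mxE exprMn. Qed.

Lemma ncolN p (v : 'cV[R]_p) : ncol (- v) = ncol v.
Proof. by apply: eq_bigr => i _; rewrite mxE sqrrN. Qed.

Lemma ncolB p (v w : 'cV[R]_p) : ncol (v - w) = ncol (w - v).
Proof. by rewrite -opprB ncolN. Qed.

Lemma lip_aux (h : R -> R) (L : R) x y : x < y ->
  (forall z, derivable h z 1) -> (forall z, 0 <= h^`() z <= L) ->
  (h y - h x) ^+ 2 <= L ^+ 2 * (y - x) ^+ 2.
Proof.
move=> xy hd hb.
have [c _ ->] := @MVT R h h^`() x y xy
  (fun z _ => ltac:(rewrite derive1E; apply: derivableP; apply: hd))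
  (derivable_within_continuous (fun z _ => hd z)).
rewrite exprMn; apply: ler_wpM2r; first exact: sqr_ge0.
have /andP [h0 h1] := hb c.
by rewrite !expr2; apply: ler_pM.
Qed.

Lemma lip (h : R -> R) (L : R) x y :
  (forall z, derivable h z 1) -> (forall z, 0 <= h^`() z <= L) ->
  (h x - h y) ^+ 2 <= L ^+ 2 * (x - y) ^+ 2.
Proof.
move=> hd hb; have [xy|yx|->] := ltgtP x y.
- by rewrite -sqrrN opprB -(sqrrN (x - y)) opprB; apply: lip_aux.
- by apply: lip_aux.
- by rewrite !subrr expr0n /= mulr0.
Qed.

Lemma grad_lip n (f : 'I_n -> R -> R) (m L : R) :
  0 < m ->
  (forall i x, derivable (derive1 (f i)) x 1) ->
  (forall i x, m <= derive1 (derive1 (f i)) x <= L) ->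
  forall x y : 'cV[R]_n, ncol (grad f x - grad f y) <= L ^+ 2 * ncol (x - y).
Proof.
move=> m0 hd hb x y; rewrite /ncol mulr_sumr; apply: ler_sum => i _.
rewrite /grad !mxE; apply: lip => // z; have /andP [h1 h2] := hb i z.
by rewrite h2 andbT; apply: le_trans h1; apply: ltW.
Qed.

Lemma colbound p (M : 'M[R]_p) : M^T = M -> (forall u, 0 <= form M u u) ->
  forall v, ncol (M *m v) <= max_eig M ^+ 2 * ncol v.
Proof.
move=> sM psd v; rewrite -!ncol_tr trmx_mul sM; exact: maxeig_bound.
Qed.

Lemma comb (X Y Z Y' Z' p1 p2 : R) : 0 <= p1 -> 0 <= p2 ->
  X <= p1 * Y + p2 * Z -> Y <= Y' -> Z <= Z' -> X <= p1 * Y' + p2 * Z'.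
Proof.
move=> h1 h2 hX hY hZ; apply: (le_trans hX); apply: lerD; exact: ler_wpM2l.
Qed.

End Spec.

Theorem lemma3p11 (R : realType) (n eps : nat)
  (ends : 'I_eps -> 'I_n * 'I_n)
  (* simple undirected graph: no self-loops, each edge listed once *)
  (Hloop : forall e, (ends e).1 != (ends e).2)
  (Hsimple : forall e e', (ends e == ends e') || (ends e == ((ends e').2, (ends e').1)) -> e = e')
  (* connected *)
  (Hconn : forall i j, connect (adj ends) i j)
  (f : 'I_n -> R -> R) (m L : R) (Hm : 0 < m) (HmL : m <= L)
  (Hd1 : forall i x, derivable (f i) x 1)
  (Hd2 : forall i x, derivable (derive1 (f i)) x 1)
  (Hf2 : forall i x, m <= derive1 (derive1 (f i)) x <= L)
  (B : 'M[R]_n)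
  (HBsym : B^T = B)
  (HBpsd : forall v : 'cV[R]_n, 0 <= (v^T *m B *m v) 0 0)
  (HBker : forall v : 'cV[R]_n, (B *m v == 0) = (incidence R ends *m v == 0))
  (HBedge : forall i j, i != j -> B i j != 0 -> adj ends i j)
  (HBrho : max_eig B < m)
  (xs : 'cV[R]_n) (ls : 'cV[R]_eps)
  (Hxs_feas : incidence R ends *m xs = 0)
  (Hxs_min : forall y : 'cV[R]_n, incidence R ends *m y = 0 -> fsum f xs <= fsum f y)
  (Hxs_uniq : forall y : 'cV[R]_n, incidence R ends *m y = 0 -> fsum f y <= fsum f xs -> y = xs)
  (Hkkt : grad f xs + (incidence R ends)^T *m ls = 0)
  (HBxs : B *m xs = 0)
  (Hls_col : exists w : 'cV[R]_n, ls = incidence R ends *m w)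
  (alpha beta : R) (Halpha : 0 < alpha) (Hbeta : 0 < beta)
  (T : nat) (HT : (1 <= T)%N) (x0 : 'cV[R]_n)
  (db cb gb eb : R) (Hdb : 1 < db) (Hcb : 1 < cb) (Hgb : 1 < gb) (Heb : 1 < eb)
  (k : nat) :
  let A := incidence R ends in
  let xk := (flex_outer f A B alpha beta T x0 k).1 in
  let lk := (flex_outer f A B alpha beta T x0 k).2 in
  let lk1 := (flex_outer f A B alpha beta T x0 k.+1).2 in
  let xT := flex_inner f A B alpha xk lk T in
  let xT1 := flex_inner f A B alpha xk lk T.-1 in
  let s := min_nz_eig (A *m A^T) in
  enorm (lk1 - ls) ^+ 2 <=
    db * cb / (alpha ^+ 2 * s) * (gb + gb * alpha ^+ 2 * L ^+ 2 / (gb - 1))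
      * enorm (xT - xT1) ^+ 2
  + db * cb / (s * (cb - 1)) * (eb * beta ^+ 2 * max_eig (A^T *m A) ^+ 2 + eb * L ^+ 2 / (eb - 1))
      * enorm (xT - xs) ^+ 2
  + db * max_eig B ^+ 2 / (s * (db - 1)) * enorm (xk - xs) ^+ 2.
Proof.
cbv zeta.
set A := incidence R ends.
set xk := (flex_outer f A B alpha beta T x0 k).1.
set lk := (flex_outer f A B alpha beta T x0 k).2.
set lk1 := (flex_outer f A B alpha beta T x0 k.+1).2.
set xT := flex_inner f A B alpha xk lk T.
set xT1 := flex_inner f A B alpha xk lk T.-1.
set s := min_nz_eig (A *m A^T).
have HlkS : lk1 = lk + beta *: (A *m xT) by [].
have HxT : xT = xT1 - alpha *: grad f xT1 - alpha *: (A^T *m lk) - alpha *: (B *m xk).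
  by rewrite /xT /xT1 -[in LHS](prednK HT).
have Hcol : forall j, exists w, (flex_outer f A B alpha beta T x0 j).2 = A *m w.
  elim=> [|j [w IH]]; first by exists 0; rewrite mulmx0.
  exists (w + beta *: flex_inner f A B alpha (flex_outer f A B alpha beta T x0 j).1
                                  (flex_outer f A B alpha beta T x0 j).2 T).
  by rewrite /= IH mulmxDr scalemxAr.
have [wl Hwl0] := Hcol k.
have Hwl : lk = A *m wl by exact: Hwl0.
have [ws Hws] := Hls_col.
rewrite -/A in Hkkt Hxs_feas Hws.
have e_ls : A^T *m ls = - grad f xs by apply/eqP; rewrite -addr_eq0 addrC Hkkt.
pose u := lk1 - ls.
have Hu : u = A *m (wl + beta *: xT - ws).
  by rewrite /u HlkS Hwl Hws mulmxBr mulmxDr scalemxAr.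
have uA : (u^T <= A^T)%MS by rewrite Hu trmx_mul submxMl.
have [s0 sH] := mineig_bound uA.
rewrite trmxK -/s in s0 sH.
have eAu : nrm2 (u^T *m A) = ncol (A^T *m u) by rewrite -ncol_tr trmx_mul trmxK.
rewrite eAu !ncol_tr in sH.
pose D := xT - xT1; pose e1 := xT - xs; pose e0 := xk - xs.
pose t1 := - (alpha^-1 *: D); pose t2 := - (grad f xT1 - grad f xT).
pose t3 := - (grad f xT - grad f xs); pose t4 := beta *: (A^T *m A *m e1).
pose t5 := - (B *m e0).
have Hid : A^T *m u = ((t1 + t2) + (t4 + t3)) + t5.
  rewrite /u HlkS mulmxBr mulmxDr -scalemxAr e_ls /t4 /e1 /t5 /e0.
  rewrite mulmxBr -(mulmxA A^T A xs) Hxs_feas mulmx0 subr0 mulmxBr HBxs subr0.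
  rewrite mulmxA /t1 /t2 /t3 /D.
  set P1 := A^T *m lk; set P2 := A^T *m A *m xT; set P4 := B *m xk.
  set g1 := grad f xT1; set gT := grad f xT; set gs := grad f xs.
  rewrite -/P1 -/P4 -/g1 in HxT.
  apply/colP => i; have Hi := congr1 (fun v : 'cV[R]_n => v i 0) HxT; rewrite /= !mxE in Hi.
  rewrite !mxE Hi; have an : alpha != 0 by rewrite gt_eqF.
  by field.
pose a := ncol D; pose b := ncol e1; pose z := ncol e0.
pose rhoA := max_eig (A^T *m A); pose rhoB := max_eig B.
have gl := grad_lip Hm Hd2 Hf2.
have h_t1 : ncol t1 <= alpha^-1 ^+ 2 * a by rewrite /t1 ncolN ncolZ.
have h_t2 : ncol t2 <= L ^+ 2 * a.
  by rewrite /t2 ncolN /a /D [ncol (xT - _)]ncolB; apply: gl.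
have h_t3 : ncol t3 <= L ^+ 2 * b by rewrite /t3 ncolN; apply: gl.
have h_t4 : ncol t4 <= beta ^+ 2 * (rhoA ^+ 2 * b).
  rewrite /t4 ncolZ; apply: ler_wpM2l; first exact: sqr_ge0.
  apply: colbound; first exact: symC.
  by move=> v; rewrite formC; apply: nrm2_ge0.
have h_t5 : ncol t5 <= rhoB ^+ 2 * z.
  rewrite /t5 ncolN; apply: colbound => // v.
  by have := HBpsd v^T; rewrite trmxK.
have pos : forall c : R, 1 < c -> 0 <= c /\ 0 <= c / (c - 1).
  by move=> c c1; split; [lra | apply: divr_ge0; lra].
have [pd pd'] := pos _ Hdb; have [pc pc'] := pos _ Hcb.
have [pg pg'] := pos _ Hgb; have [pe pe'] := pos _ Heb.
have W1 := comb pg pg' (youngN t1 t2 Hgb) h_t1 h_t2.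
have W2 := comb pe pe' (youngN t4 t3 Heb) h_t4 h_t3.
have W3 := comb pc pc' (youngN (t1 + t2) (t4 + t3) Hcb) W1 W2.
have W4 := comb pd pd' (youngN ((t1 + t2) + (t4 + t3)) t5 Hdb) W3 h_t5.
rewrite -Hid in W4.
move: W4; set Wt := (X in _ <= X) => W4.
rewrite !enorm2 -/D -/e1 -/e0 -/a -/b -/z -/rhoA -/rhoB.
rewrite -/u.
have [sz|snz] := eqVneq s 0.
  have u0 : u = 0.
    apply/eqP; apply: contraT => unz.
    have : u^T != 0 by rewrite trmx_eq0.
    by move/sH => [+ _]; rewrite sz ltxx.
  rewrite u0 sz !(mulr0, invr0, mul0r, addr0).
  by rewrite /ncol big1 // => i _; rewrite mxE expr0n.
have sp : 0 < s by rewrite lt_def snz s0.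
have hu : s * ncol u <= ncol (A^T *m u).
  have [u0|unz] := eqVneq u 0.
    by rewrite u0 /ncol big1 ?mulr0 => [|i _]; [apply: sumr_ge0 => i _; apply: sqr_ge0 | rewrite mxE expr0n].
  have : u^T != 0 by rewrite trmx_eq0.
  by move/sH => [_ ->].
apply: (@le_trans _ _ (Wt / s)).
  by rewrite ler_pdivlMr // mulrC; apply: le_trans hu W4.
rewrite le_eqVlt; apply/orP; left; apply/eqP.
rewrite /Wt; clearbody s.
field.
by rewrite snz !subr_eq0 !gt_eqF.
Qed.
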